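(* Let $m,n\ge 2$ and $L\ge 2$ be integers, and let $p_1,\dots,p_L$ and $q_1,\dots,q_L$ be positive integers with $n=\prod_{\ell=1}^Lp_\ell$ and $m=\prod_{\ell=1}^Lq_\ell$. For positive integers $r_1,\dots,r_{L-1}$ (with $r_0=r_L:=1$) consider the architecture $\beta=(\pi_\ell)_{\ell=1}^L$ with $\pi_\ell=(a_\ell,b_\ell,c_\ell,d_\ell)$, $a_\ell=\prod_{j=1}^{\ell-1}p_j$, $d_\ell=\prod_{j=\ell+1}^Lq_j$, $b_\ell=q_\ell r_{\ell-1}$, $c_\ell=p_\ell r_\ell$. (1) If $p_\ell\ge 2$ and $q_\ell\ge 2$ for every $1\le\ell\le L$, then there exists a choice of integers $r_1,\dots,r_{L-1}$ for which $\beta$ is non-redundant. (2) If $q_1=1$, or $p_L=1$, or $p_\ell q_\ell=1$ for some $2\le\ell\le L-1$, then no choice of $r_1,\dots,r_{L-1}$ makes $\beta$ non-redundant.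
   Context: Patterns are tuples $(a,b,c,d)$ of positive integers. Patterns $\pi=(a,b,c,d),\pi'=(a',b',c',d')$ are chainable if $ac/a'=b'd'/d=:r(\pi,\pi')$ is an integer, $a\mid a'$, $d'\mid d$; a chainable pair is redundant if $r(\pi,\pi')\ge\min(b,c')$. A chainable architecture (sequence of patterns whose consecutive pairs are chainable) is redundant if some consecutive pair is redundant, and non-redundant otherwise. (The architectures defined in the claim are always chainable.) *)

(* Defs.v *)
From mathcomp Require Import all_boot.
Set Implicit Arguments. Unset Strict Implicit. Unset Printing Implicit Defensive.

Record pattern := Pattern { pa : nat; pb : nat; pc : nat; pd : nat }.

Definition ratio (x y : pattern) : nat := (pa x * pc x) %/ pa y.

Definition chainable (x y : pattern) : bool :=
  [&& pa y %| pa x * pc x, pd x %| pb y * pd y,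
      (pa x * pc x) %/ pa y == (pb y * pd y) %/ pd x,
      pa x %| pa y & pd y %| pd x].

Definition redundant_pair (x y : pattern) : bool :=
  minn (pb x) (pc y) <= ratio x y.

Definition consec_pairs (s : seq pattern) : seq (pattern * pattern) :=
  zip s (behead s).

Definition chainable_arch (s : seq pattern) : bool :=
  all (fun pp => chainable pp.1 pp.2) (consec_pairs s).

Definition nonredundant (s : seq pattern) : bool :=
  chainable_arch s && all (fun pp => ~~ redundant_pair pp.1 pp.2) (consec_pairs s).

(* the architecture beta of the corollary; p, q, r are indexed from 1,
   and r_0 = r_L = 1 are forced regardless of the values r 0, r L. *)
Definition rext (L : nat) (r : nat -> nat) (l : nat) : nat :=
  if (l == 0) || (l == L) then 1 else r l.

Definition beta_pat (L : nat) (p q r : nat -> nat) (l : nat) : pattern :=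
  Pattern (\prod_(1 <= j < l) p j)
          (q l * rext L r l.-1)
          (p l * rext L r l)
          (\prod_(l.+1 <= j < L.+1) q j).

Definition beta (L : nat) (p q r : nat -> nat) : seq pattern :=
  [seq beta_pat L p q r l | l <- iota 1 L].

(* Main.v *)
Require Import Defs.
From mathcomp Require Import all_boot.
From mathcomp Require Import zify.

Lemma consec_map (f : nat -> pattern) a n :
  consec_pairs (map f (iota a n.+1)) = map (fun l => (f l, f l.+1)) (iota a n).
Proof.
elim: n a => [|n IH] a //=.
by rewrite /consec_pairs /= in IH *; rewrite IH.
Qed.

Lemma prod_pos (F : nat -> nat) a b :
  (forall i, a <= i < b -> 0 < F i) -> 0 < \prod_(a <= j < b) F j.
Proof.
move=> H; rewrite big_seq; apply: prodn_cond_gt0 => i.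
by rewrite mem_index_iota; apply: H.
Qed.

Section S.
Variables (L : nat) (p q r : nat -> nat).
Hypothesis pp : forall l, 1 <= l <= L -> 0 < p l.
Hypothesis qp : forall l, 1 <= l <= L -> 0 < q l.

Lemma prodS (F : nat -> nat) l : 1 <= l ->
  \prod_(1 <= j < l.+1) F j = \prod_(1 <= j < l) F j * F l.
Proof. by move=> l1; rewrite big_nat_recr. Qed.
Lemma prodL (F : nat -> nat) l : l < L ->
  \prod_(l.+1 <= j < L.+1) F j = F l.+1 * \prod_(l.+2 <= j < L.+1) F j.
Proof. by move=> l1; rewrite big_ltn // ltnS. Qed.

Lemma ratio_bp l : 1 <= l < L ->
  ratio (beta_pat L p q r l) (beta_pat L p q r l.+1) = rext L r l.
Proof.
move=> /andP [l1 lL]; rewrite /ratio /beta_pat.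
cbn [pa pb pc pd]; rewrite prodS // mulnA mulKn //.
have p0 : 0 < p l by apply: pp; rewrite l1 ltnW.
rewrite muln_gt0 p0 andbT.
apply: prod_pos => i /andP [i1 il]; apply: pp; rewrite i1 /=.
by apply: leq_trans (ltnW lL); apply: ltnW.
Qed.

Lemma chain_bp l : 1 <= l < L ->
  chainable (beta_pat L p q r l) (beta_pat L p q r l.+1).
Proof.
move=> /andP [l1 lL]; rewrite /chainable /beta_pat.
cbn [pa pb pc pd].
rewrite prodS // (prodL q l lL).
have Pp : 0 < \prod_(1 <= j < l) p j.
  apply: prod_pos => i /andP [i1 il]; apply: pp; lia.
have Qp : 0 < \prod_(l.+2 <= j < L.+1) q j.
  apply: prod_pos => i /andP [i1 il]; apply: qp; lia.
have p0 : 0 < p l by apply: pp; lia.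
have q0 : 0 < q l.+1 by apply: qp; lia.
have E1 : \prod_(1 <= j < l) p j * (p l * rext L r l)
  = (\prod_(1 <= j < l) p j * p l) * rext L r l by rewrite mulnA.
have E2 : q l.+1 * rext L r l.+1.-1 * \prod_(l.+2 <= j < L.+1) q j
  = (q l.+1 * \prod_(l.+2 <= j < L.+1) q j) * rext L r l.
  by rewrite /= -!mulnA (mulnC (rext L r l)).
have HA : 0 < \prod_(1 <= j < l) p j * p l by rewrite muln_gt0 Pp p0.
have HB : 0 < q l.+1 * \prod_(l.+2 <= j < L.+1) q j by rewrite muln_gt0 Qp q0.
rewrite E1 E2 (mulKn _ HA) (mulKn _ HB) eqxx /=.
by apply/and4P; split; [apply: dvdn_mulr | apply: dvdn_mulr | apply: dvdn_mulr | apply: dvdn_mull].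
Qed.
Lemma red_bp l : 1 <= l < L ->
  redundant_pair (beta_pat L p q r l) (beta_pat L p q r l.+1) =
  (minn (q l * rext L r l.-1) (p l.+1 * rext L r l.+1) <= rext L r l).
Proof. by move=> H; rewrite /redundant_pair ratio_bp. Qed.

End S.

Lemma beta_eq L p q r : 1 <= L ->
  consec_pairs (beta L p q r) =
  map (fun l => (beta_pat L p q r l, beta_pat L p q r l.+1)) (iota 1 L.-1).
Proof. by move=> L1; rewrite /beta -(prednK L1) consec_map prednK. Qed.

Theorem corollary4p17 (m n L : nat) (p q : nat -> nat) :
  2 <= m -> 2 <= n -> 2 <= L ->
  (forall l, 1 <= l <= L -> 0 < p l) ->
  (forall l, 1 <= l <= L -> 0 < q l) ->
  n = \prod_(1 <= l < L.+1) p l ->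
  m = \prod_(1 <= l < L.+1) q l ->
  ((forall l, 1 <= l <= L -> 2 <= p l /\ 2 <= q l) ->
     exists r : nat -> nat,
       (forall l, 1 <= l < L -> 0 < r l) /\ nonredundant (beta L p q r))
  /\
  ((q 1 = 1 \/ p L = 1 \/ exists l, 2 <= l <= L.-1 /\ p l * q l = 1) ->
     forall r : nat -> nat,
       (forall l, 1 <= l < L -> 0 < r l) -> ~~ nonredundant (beta L p q r)).
Proof.
move=> m2 n2 L2 pp qp _ _.
have L1 : 1 <= L by lia.
split.
- move=> H2; exists (fun _ => 1); split => //.
  have r1 k : rext L (fun _ => 1) k = 1 by rewrite /rext; case: ifP.
  rewrite /nonredundant /chainable_arch beta_eq //; apply/andP; split;
    rewrite all_map; apply/allP => l; rewrite mem_iota => Hl /=.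
  + apply: chain_bp => //; lia.
  + rewrite red_bp //; last by lia.
    rewrite !r1 !muln1 -ltnNge leq_min.
    have [h1 _] := H2 l.+1 ltac:(lia).
    have [_ h2] := H2 l ltac:(lia).
    lia.
- move=> Hc r rp.
  have rpos k : k <= L -> 0 < rext L r k.
    move=> kL; rewrite /rext; case: ifP => // /norP [k0 kL']; apply: rp; lia.
  have inI l : 1 <= l < L -> l \in iota 1 L.-1.
    move=> Hl; rewrite mem_iota; lia.
  apply/negP => /andP [_]; rewrite beta_eq // all_map => /allP H.
  have key l : 1 <= l < L ->
    ~~ (minn (q l * rext L r l.-1) (p l.+1 * rext L r l.+1) <= rext L r l).
    by move=> Hl; have := H _ (inI l Hl); rewrite /= red_bp.
  case: Hc => [q1 | [pL | [l [Hl plq]]]].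
  + have := key 1 ltac:(lia).
    rewrite q1 /= {1}/rext /= mul1n.
    have := rpos 1 ltac:(lia); lia.
  + have := key L.-1 ltac:(lia).
    rewrite prednK // pL mul1n {2}/rext eqxx orbT.
    have := rpos L.-1 ltac:(lia); lia.
  + move: plq => /eqP; rewrite muln_eq1 => /andP [/eqP p1 /eqP q1].
    have := key l.-1 ltac:(lia).
    have := key l ltac:(lia).
    rewrite prednK; last by lia.
    rewrite p1 q1 !mul1n; lia.
Qed.
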